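(* Let $V$ be a separable real Banach space with topological dual $V^*$, and let $M\subset V^*$ be a linearly independent set of continuous linear functionals that separates the points of $V$ and is fundamental with respect to the weak$^*$-topology (i.e. its linear span is weak$^*$-dense in $V^*$). Let $X=(X_m)_{m\in M}$ be a random variable with values in $(\mathbb R^M,\bigotimes_{m\in M}\mathcal B(\mathbb R))$ on a complete probability space $(\Omega,\mathcal F,\mathbb P)$, such that $X$ almost surely lies in the range of the embedding $V\ni v\mapsto (m(v))_{m\in M}\in\mathbb R^M$. Then there is a random variable $\tilde X:\Omega\to V$ which is measurable with respect to the Borel $\sigma$-algebra of $V$ and whose image under this embedding equals $X$ almost surely, i.e. $m(\tilde X)=X_m$ for all $m\in M$ almost surely.
   Context: The embedding $v\mapsto(m(v))_{m\in M}$ is injective since $M$ separates points. All random variables live on a complete probability space. *)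

(* Defs.v *)
From HB Require Import structures.
From mathcomp Require Import all_boot all_order all_algebra.
From mathcomp Require Import all_classical all_reals all_analysis.
Set Implicit Arguments. Unset Strict Implicit. Unset Printing Implicit Defensive.
Import Order.TTheory GRing.Theory Num.Theory.
Import numFieldNormedType.Exports.
Local Open Scope classical_set_scope.
Local Open Scope ring_scope.

Section defs.
Context {R : realType} {V : normedModType R}.

Definition is_linear_functional (f : V -> R) :=
  forall (a : R) (u v : V), f (a *: u + v) = a * f u + f v.

Definition in_dual (f : V -> R) := is_linear_functional f /\ continuous f.

Definition separable_space := exists D : set V, countable D /\ closure D = setT.

Definition lin_indep_family (I : Type) (m : I -> V -> R) :=
  forall (n : nat) (s : 'I_n -> I) (c : 'I_n -> R),
    injective s -> (forall v, \sum_(k < n) c k * m (s k) v = 0) ->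
    forall k, c k = 0.

Definition separates_points (I : Type) (m : I -> V -> R) :=
  forall u v : V, (forall i, m i u = m i v) -> u = v.

(* the linear span of the family is weak*-dense in V^*: every weak*-basic
   neighbourhood {psi | |psi(v_j) - phi(v_j)| < eps, j < k} of every
   phi in V^* meets the span *)
Definition weak_star_fundamental (I : Type) (m : I -> V -> R) :=
  forall phi : V -> R, in_dual phi ->
  forall (k : nat) (v : 'I_k -> V) (eps : R), 0 < eps ->
  exists (n : nat) (s : 'I_n -> I) (c : 'I_n -> R),
    forall j, `| \sum_(l < n) c l * m (s l) (v j) - phi (v j) | < eps.

End defs.

Definition borel_sets (T : topologicalType) : set (set T) := <<s open >>.

Definition product_sigma (I : Type) (R : realType) : set (set (I -> R)) :=
  <<s \bigcup_(i in [set: I])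
        [set (fun x : I -> R => x i) @^-1` B | B in [set B : set R | measurable B]] >>.

(* Main.v *)
Require Import Defs.
From HB Require Import structures.
From mathcomp Require Import all_boot all_order all_algebra.
From mathcomp Require Import all_classical all_reals all_analysis.
Import Order.TTheory GRing.Theory Num.Theory.
Import numFieldNormedType.Exports.
Local Open Scope classical_set_scope.
Local Open Scope ring_scope.
From mathcomp Require Import lra.


Section Sep.
Context {R : numFieldType} {T : pseudoMetricType R} (S : set (set T)).
Context (S0 : S set0).
Context (ST : S setT).
Context (SU : forall F : nat -> set T, (forall n, S (F n)) -> S (\bigcup_n F n)).
Context (SI : forall F : nat -> set T, (forall n, S (F n)) -> S (\bigcap_n F n)).

Definition sep (A B : set T) := exists E, [/\ S E, A `<=` E & E `&` B = set0].

Lemma sep_mono {A A' B B'} : A `<=` A' -> B `<=` B' -> sep A' B' -> sep A B.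
Proof.
move=> AA BB [E [SE AE EB]]; exists E; split => //; first exact: subset_trans AE.
by rewrite -subset0 -EB; apply: setIS.
Qed.

Lemma sep_bigcup (A B : nat -> set T) :
  (forall n k, sep (A n) (B k)) -> sep (\bigcup_n A n) (\bigcup_k B k).
Proof.
move=> h.
have /choice[E hE] : forall n : nat, exists f : nat -> set T,
    forall k, [/\ S (f k), A n `<=` f k & f k `&` B k = set0].
  by move=> n; have [f hf] := choice (h n); exists f.
exists (\bigcup_n \bigcap_k E n k); split.
- by apply: SU => n; apply: SI => k; have [] := hE n k.
- move=> x [n _ Ax]; exists n => // k _; have [_ + _] := hE n k; exact.
- apply/seteqP; split => // x [[n _ Ex] [k _ Bx]].
  have [_ _ /seteqP[+ _]] := hE n k; apply; split => //; exact: Ex.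
Qed.

Definition scheme (A : set T) (Phi : seq nat -> set T) :=
  [/\ A `<=` Phi [::], (forall s, Phi s `<=` \bigcup_n Phi (n :: s)) &
   forall L : nat -> seq nat, L 0%N = [::] -> (forall k, exists n, L k.+1 = n :: L k) ->
     (forall k, Phi (L k) !=set0) ->
     exists x, A x /\ forall e, 0 < e -> exists K, forall k, (K <= k)%N -> Phi (L k) `<=` ball x e].

Fixpoint iterP (f : seq nat * seq nat -> nat * nat) (k : nat) : seq nat * seq nat :=
  if k is k'.+1 then
    let p := iterP f k' in ((f p).1 :: p.1, (f p).2 :: p.2)
  else ([::], [::]).

Context (Ssep : forall x y : T, x <> y ->
  exists e1 e2, [/\ 0 < e1, 0 < e2 & sep (ball x e1) (ball y e2)]).

Lemma sep_scheme A B PA PB : scheme A PA -> scheme B PB -> A `&` B = set0 -> sep A B.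
Proof.
move=> [A0 Acov Alim] [B0 Bcov Blim] AB.
apply: contrapT => nsep.
pose NS (p : seq nat * seq nat) := ~ sep (PA p.1) (PB p.2).
have step : forall p, exists q : nat * nat, NS p -> NS (q.1 :: p.1, q.2 :: p.2).
  move=> p; case: (pselect (NS p)) => [np|np]; last by exists (0, 0)%N.
  apply: contrapT => hn; apply: np.
  apply: (sep_mono (Acov p.1) (Bcov p.2)); apply: sep_bigcup => n k.
  apply: contrapT => h; apply: hn; exists (n, k) => _; exact: h.
have [f hf] := choice step.
have NSk : forall k, NS (iterP f k).
  elim=> [|k IH] /=; first exact: (fun h => nsep (sep_mono A0 B0 h)).
  exact: hf.
have neA : forall k, PA (iterP f k).1 !=set0.
  move=> k; apply/set0P/negP => /eqP h; apply: (NSk k).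
  by exists set0; split => //; [rewrite h|exact: set0I].
have neB : forall k, PB (iterP f k).2 !=set0.
  move=> k; apply/set0P/negP => /eqP h; apply: (NSk k).
  by exists setT; split => //; rewrite h setI0.
have [x [Ax xlim]] := Alim (fun k => (iterP f k).1) erefl
  (fun k => ex_intro _ _ erefl) neA.
have [y [By ylim]] := Blim (fun k => (iterP f k).2) erefl
  (fun k => ex_intro _ _ erefl) neB.
have xy : x <> y.
  by move=> exy; move: AB => /seteqP[/(_ x) + _]; apply; rewrite exy in Ax *.
have [e1 [e2 [e10 e20 hs]]] := Ssep _ _ xy.
have [K1 hK1] := xlim e1 e10.
have [K2 hK2] := ylim e2 e20.
apply: (NSk (maxn K1 K2)); apply: (sep_mono _ _ hs).
  by apply: hK1; rewrite leq_maxl.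
by apply: hK2; rewrite leq_maxr.
Qed.

End Sep.


Section Scheme.
Context {R : realType} {V : completeNormedModType R} (d : nat -> V).
Context (dense_d : forall (y : V) (e : R), 0 < e -> exists n, ball (d n) e y).

Definition rr (k : nat) : R := k.+1%:R^-1.
Lemma rr_gt0 k : 0 < rr k. Proof. by rewrite /rr invr_gt0 ltr0Sn. Qed.

Fixpoint bc (s : seq nat) : set V :=
  if s is n :: s' then closed_ball (d n) (rr (size s')) `&` bc s' else setT.
Definition PhiF (F : set V) s := F `&` bc s.

Lemma rr_small (e : R) : 0 < e -> exists k, forall j, (k <= j)%N -> rr j < e.
Proof.
move=> e0; have [N _ HN] := near_infty_natSinv_lt (PosNum e0).
by exists N => j /HN.
Qed.

Lemma cb_ball (c : V) (r e : R) : 0 < e -> r <= e / 2 -> closed_ball c r `<=` ball c e.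
Proof.
move=> e0 re y cy; apply: (subset_closure_half e0).
exact: (le_closed_ball re).
Qed.

Lemma scheme_closed (F : set V) : closed F -> scheme F (PhiF F).
Proof.
move=> clF; split.
- by move=> y Fy; split.
- move=> s y [Fy bcy]; have [n hn] := dense_d y _ (rr_gt0 (size s)).
  by exists n => //; split => //; split => //; exact: subset_closed_ball.
move=> L L0 Lstep ne.
have [nk hnk] := choice Lstep.
have sizeL : forall k, size (L k) = k.
  by elim=> [|k IH]; rewrite ?L0 // hnk /= IH.
have sub1 : forall k, PhiF F (L k.+1) `<=` PhiF F (L k).
  by move=> k y; rewrite /PhiF hnk => -[Fy [_ bcy]]; split.
have sub2 : forall k, PhiF F (L k.+1) `<=` closed_ball (d (nk k)) (rr k).
  by move=> k y; rewrite /PhiF hnk /= sizeL => -[_ [cb _]].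
have mono : forall k j, (k <= j)%N -> PhiF F (L j) `<=` PhiF F (L k).
  move=> k j /subnKC <-; elim: (j - k)%N => [|i IH]; rewrite ?addn0 ?addnS //.
  exact: subset_trans (sub1 _) IH.
have [u hu] := choice (fun k => ne k.+1).
have inball : forall k j, (k <= j)%N -> closed_ball (d (nk k)) (rr k) (u j).
  by move=> k j kj; apply: sub2; apply: (mono k.+1 j.+1 kj); exact: hu.
have cu : cvg (u @ \oo).
  apply: cauchy_cvg; apply: cauchy_exP => e e0.
  have [k hk] := rr_small _ (divr_gt0 e0 (ltr0Sn _ 1)).
  exists (d (nk k)); exists k => // j /= kj.
  apply: (@cb_ball _ (rr k) _ e0); first exact/ltW/hk.
  exact: inball.
set x := lim (u @ \oo).
have Fx : F x.
  apply: (@closed_cvg _ _ _ _ u F clF _ _ cu); apply: nearW => j.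
  by have [] := hu j.
have xcb : forall k, closed_ball (d (nk k)) (rr k) x.
  move=> k; apply: (@closed_cvg _ _ _ _ u _ (@closed_ball_closed _ _ _ _) _ _ cu).
  by exists k => // j /= kj; exact: inball.
exists x; split => // e e0.
have e20 : 0 < e / 2 by rewrite divr_gt0.
have [k hk] := rr_small _ (divr_gt0 e20 (ltr0Sn _ 1)).
exists k.+1 => j kj y /(mono _ _ kj) /sub2 hy.
have hb : closed_ball (d (nk k)) (rr k) `<=` ball (d (nk k)) (e / 2).
  by apply: cb_ball => //; apply/ltW/hk.
rewrite (splitr e); apply: (ball_triangle (ball_sym (hb _ (xcb k)))).
exact: hb.
Qed.

End Scheme.

Theorem lemma3p9 (R : realType) (V : completeNormedModType R)
  (I : Type) (m : I -> V -> R)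
  (d : measure_display) (Omega : measurableType d) (P : probability Omega R)
  (X : Omega -> I -> R) :
  separable_space (V := V) ->
  (forall i, in_dual (m i)) ->
  lin_indep_family m ->
  separates_points m ->
  weak_star_fundamental m ->
  measure_is_complete P ->
  (forall A, @product_sigma I R A -> measurable (X @^-1` A)) ->
  {ae P, forall w, exists v : V, forall i, X w i = m i v} ->
  exists Xt : Omega -> V,
    (forall B, @borel_sets V B -> measurable (Xt @^-1` B)) /\
    {ae P, forall w, forall i, m i (Xt w) = X w i}.
Proof.
move=> [D [cD clD]] mdual _ msep _ Pcomp Xmeas Xae.
have [f finj] := countable_injP _ cD.
pose dd (n : nat) : V := match pselect (exists v, D v /\ f v = n) with
  | left h => projT1 (cid h) | right _ => 0 end.
have ddE : forall v, D v -> dd (f v) = v.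
  move=> v Dv; rewrite /dd; case: pselect => [h|[]]; last by exists v.
  have [Dw fw] := projT2 (cid h); apply: finj; rewrite ?inE //.
have dense_d : forall (y : V) (e : R), 0 < e -> exists n, ball (dd n) e y.
  move=> y e e0; have : closure D y by rewrite clD.
  move=> /(_ _ (nbhsx_ballx y e e0)) [v [Dv yv]].
  by exists (f v); rewrite ddE //; exact: ball_sym.
set O0 := [set w | exists v : V, forall i, X w i = m i v].
have mNO0 : measurable (~` O0) := Pcomp _ Xae.
have mO0 : measurable O0 by rewrite -(setCK O0); exact: measurableC.
have negS : forall Z, measurable (~` O0 `&` Z).
  by move=> Z; apply: Pcomp; apply: (negligibleS _ Xae) => w [].
pose Xt w := match pselect (O0 w) with
  | left h => projT1 (cid h) | right _ => 0 end.
have XtE : forall w, O0 w -> forall i, X w i = m i (Xt w).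
  by move=> w Ow; rewrite /Xt; case: pselect => // h; exact: projT2 (cid h).
pose S := [set E : set V | measurable (Xt @^-1` E)].
have Sdec : forall (E : set V) (A : set (I -> R)), product_sigma A ->
    (forall v, E v <-> A (fun i => m i v)) -> S E.
  move=> E A pA hEA; rewrite /S /=.
  have -> : Xt @^-1` E = (O0 `&` X @^-1` A) `|` (~` O0 `&` Xt @^-1` E).
    apply/seteqP; split => w /=.
      move=> Ew; case: (pselect (O0 w)) => Ow; [left|right] => //; split => //.
      have -> : X w = (fun i => m i (Xt w)) by apply/funext => i; exact: XtE.
      exact/hEA.
    move=> [[Ow Aw]|[]//]; apply/hEA.
    by have <- : X w = (fun i => m i (Xt w)) by apply/funext => i; exact: XtE.
  by apply: measurableU => //; apply: measurableI => //; exact: Xmeas.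
have Sopen : forall i (B : set R), open B -> S [set v | B (m i v)].
  move=> i B oB; apply: (Sdec _ ((fun g => g i) @^-1` B)) => // .
  apply: sub_sigma_algebra; exists i => //; exists B => //.
  exact: measurable_realfun.open_measurable.
have S0 : S set0 by rewrite /S /= preimage_set0.
have ST : S setT by rewrite /S /= preimage_setT.
have SU : forall F : nat -> set V, (forall n, S (F n)) -> S (\bigcup_n F n).
  by move=> F hF; rewrite /S /= preimage_bigcup; exact: bigcupT_measurable.
have SI : forall F : nat -> set V, (forall n, S (F n)) -> S (\bigcap_n F n).
  by move=> F hF; rewrite /S /= preimage_bigcap; exact: bigcapT_measurable.
have SC : forall E, S E -> S (~` E).
  by move=> E hE; rewrite /S /= -preimage_setC; exact: measurableC.
have contb : forall i (x : V) (e : R), 0 < e ->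
    exists2 r, 0 < r & forall z, ball x r z -> `|m i x - m i z| < e.
  move=> i x e e0; have [_ cm] := mdual i.
  have hn := @cvgr_dist_lt R R^o _ _ _ (m i) (m i x) (cm x) e e0.
  have := (nbhs_ballP x _).1 (hn _).
  case=> r /= r0 hr.
  by exists r => // z /hr.
have Ssep : forall x y : V, x <> y ->
    exists e1 e2, [/\ 0 < e1, 0 < e2 & sep S (ball x e1) (ball y e2)].
  move=> x y xy.
  have [i hi] : exists i, m i x != m i y.
    apply: contrapT => h; apply: xy; apply: msep => i.
    by apply/eqP; apply: contrapT => hn; apply: h; exists i; apply/negP.
  have sepE : forall E, S E -> forall e1 e2, 0 < e1 -> 0 < e2 ->
      ball x e1 `<=` E -> ball y e2 `<=` ~` E ->
      exists e1 e2, [/\ 0 < e1, 0 < e2 & sep S (ball x e1) (ball y e2)].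
    move=> E SE e1 e2 e10 e20 h1 h2; exists e1, e2; split => //.
    exists E; split => //; apply/seteqP; split => // z [Ez /h2]; exact.
  set a := m i x; set b := m i y.
  have [ab|ba|eab] := ltgtP a b; last by move/eqP: hi.
  - have e0 : 0 < (b - a) / 2 by rewrite divr_gt0 // subr_gt0.
    have [r1 r10 h1] := contb i x _ e0.
    have [r2 r20 h2] := contb i y _ e0.
    apply: (sepE [set v | m i v < (a + b) / 2] _ r1 r2) => //.
    + by apply: (Sopen i [set t : R | t < (a + b) / 2]); exact: open_lt.
    + move=> z /h1 /= hz; move: hz; rewrite -/a.
      rewrite ltr_norml => /andP[hz1 hz2] /=; lra.
    + move=> z /h2 /= hz; move: hz; rewrite -/b.
      rewrite ltr_norml => /andP[hz1 hz2] /=; lra.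
  - have e0 : 0 < (a - b) / 2 by rewrite divr_gt0 // subr_gt0.
    have [r1 r10 h1] := contb i x _ e0.
    have [r2 r20 h2] := contb i y _ e0.
    apply: (sepE [set v | (a + b) / 2 < m i v] _ r1 r2) => //.
    + by apply: (Sopen i [set t : R | (a + b) / 2 < t]); exact: open_gt.
    + move=> z /h1 /= hz; move: hz; rewrite -/a.
      rewrite ltr_norml => /andP[hz1 hz2] /=; lra.
    + move=> z /h2 /= hz; move: hz; rewrite -/b.
      rewrite ltr_norml => /andP[hz1 hz2] /=; lra.
have sepcl : forall F G : set V, closed F -> closed G -> F `&` G = set0 -> sep S F G.
  move=> F G cF cG FG.
  exact: (@sep_scheme _ _ S S0 ST SU SI Ssep F G _ _
    (scheme_closed dd dense_d F cF) (scheme_closed dd dense_d G cG) FG).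
have SopenU : forall U, open U -> S U.
  move=> U oU.
  pose G (p : nat) : set V := match @unpickle (nat * nat)%type p with
    | Some (n, j) => if pselect (closed_ball (dd n) (rr j) `<=` U)
                     then closed_ball (dd n) (rr j) else set0
    | None => set0 end.
  have GU : forall p, G p `<=` U.
    move=> p; rewrite /G; case: unpickle => [[n j]|]; last exact: sub0set.
    by destruct (pselect (closed_ball (dd n) (rr j) `<=` U)) => //; exact: sub0set.
  have Gcl : forall p, closed (G p).
    move=> p; rewrite /G; case: unpickle => [[n j]|]; last exact: closed0.
    by destruct (pselect (closed_ball (dd n) (rr j) `<=` U));
      [exact: closed_ball_closed|exact: closed0].
  have cov : U `<=` \bigcup_p G p.
    move=> y Uy.
    have : nbhs y U by apply: open_nbhs_nbhs; split.
    move=> /(nbhs_ballP y U) [e e0 he].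
    have e4 : 0 < e / 4 by rewrite divr_gt0.
    have [j hj] := rr_small _ e4; have rrj := hj j (leqnn j).
    have [n hn] := dense_d y _ (rr_gt0 j).
    have cbU : closed_ball (dd n) (rr j) `<=` U.
      move=> z hz; apply: he.
      have hz2 : ball (dd n) (e / 2) z.
        have e20 : 0 < e / 2 by rewrite divr_gt0.
        have hle : rr j <= e / 2 / 2 by lra.
        exact: (cb_ball (dd n) (rr j) (e / 2) e20 hle).
      have hy2 : ball y (e / 2) (dd n).
        by apply: (le_ball (e1 := rr j)); [lra|exact: ball_sym].
      by rewrite (splitr e); exact: ball_triangle hy2 hz2.
    exists (pickle (n, j)) => //; rewrite /G pickleK.
    destruct (pselect (closed_ball (dd n) (rr j) `<=` U)); last by [].
    exact: subset_closed_ball.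
  have hsep : forall p, sep S (G p) (~` U).
    move=> p; apply: sepcl => //; first exact: open_closedC.
    by apply/seteqP; split => // z [/GU Uz]; apply.
  have [E hE] := choice hsep.
  have -> : U = \bigcup_p E p.
    apply/seteqP; split => z.
      by move=> /cov [p _ Gz]; exists p => //; have [_ + _] := hE p; exact.
    move=> [p _ Ez]; apply: contrapT => nUz.
    have [_ _ /seteqP[+ _]] := hE p; by move=> /(_ z (conj Ez nUz)).
  by apply: SU => p; have [] := hE p.
exists Xt; split.
  move=> B hB; apply: (smallest_sub _ SopenU hB); split => //.
  by move=> A SA; rewrite setTD; exact: SC.
apply: (negligibleS _ Xae) => w /= nw Ow; apply: nw => i.
by rewrite -XtE.
Qed.
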